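(* Let $Q$ be a Boolean CQ as below with query graph $G$, let $I$ be an instance, let $R\in E^i$ and $v\in u_R^{+,R}\cap v_R^{\oplus}$. Let $P$ be a directed path from $u_R$ to $v$ whose first edge is $e_R$ and whose remaining part is a directed path from $v_R$ to $v$ consisting only of consistent edges. If there exist $(a,b_1),(a,b_2)\in\Pi_{u_R,v}(P^f(I))$ with $b_1\ne b_2$, then for no frugal repair $r$ of $I$ for $Q$ is there a tuple $t\in Q^f(r)$ with $t[u_R]=a$.
   Context: $Q$ is a Boolean conjunctive query without self-joins with atoms $R(u,v)$, $u\neq v$ variables, first attribute the key; relations are of consistent or inconsistent type. Query graph $G$: vertices are variables, one edge $e_R=(u_R,v_R)$ per atom, $E^i$ the inconsistent edges. $x\to y$: directed path (possibly empty) with only consistent edges; $u^{\oplus}=\{v:u\to v\}$; $u^{+,R}$ is the set of vertices reachable from $u$ by a directed path in $G$ with the edge $e_R$ removed. For a path $P$ (a set of atoms of $Q$), $P^f(I)$ is the set of satisfying valuations of the variables of $P$ in $I$, and $\Pi_{u_R,v}$ projects onto the variables $u_R,v$. A repair is a maximal subset of $I$ satisfying all key constraints; $Q^f(r)$ is the set of satisfying valuations of $Q$ in $r$, with $t[x]$ the value of variable $x$; a repair $r$ is frugal if no repair $r'$ has $Q^f(r')\subsetneq Q^f(r)$. *)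

(* Defs.v *)
From Stdlib Require Import List.
Import ListNotations.
Set Implicit Arguments.

(* An instance over relation symbols Rel and constants D:
   J R a b  means the fact R(a,b) is in J (first attribute = key). *)
Definition instance (Rel D : Type) := Rel -> D -> D -> Prop.

Definition key_consistent {Rel D : Type} (J : instance Rel D) (R : Rel) : Prop :=
  forall a b b', J R a b -> J R a b' -> b = b'.

Definition consistent_inst {Rel D : Type} (J : instance Rel D) : Prop :=
  forall R, key_consistent J R.

Definition sub_inst {Rel D : Type} (J1 J2 : instance Rel D) : Prop :=
  forall R a b, J1 R a b -> J2 R a b.

Definition finite_inst {Rel D : Type} (J : instance Rel D) : Prop :=
  exists l : list (Rel * D * D), forall R a b, J R a b -> In (R, a, b) l.

Definition is_repair {Rel D : Type} (I r : instance Rel D) : Prop :=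
  sub_inst r I /\ consistent_inst r /\
  (forall r', sub_inst r r' -> sub_inst r' I -> consistent_inst r' -> sub_inst r' r).

(* Q^f(J): satisfying valuations of the query whose atoms are R(u R, v R) *)
Definition Qf {Rel V D : Type} (u v : Rel -> V) (J : instance Rel D) (t : V -> D) : Prop :=
  forall R, J R (t (u R)) (t (v R)).

Definition frugal {Rel V D : Type} (u v : Rel -> V) (I r : instance Rel D) : Prop :=
  is_repair I r /\
  ~ (exists r', is_repair I r' /\
        (forall t, Qf u v r' t -> Qf u v r t) /\
        (exists t, Qf u v r t /\ ~ Qf u v r' t)).

(* dpath u v x y p : the list of atoms p forms a directed walk from x to y
   in the query graph (edge e_S goes from u S to v S); [] is the empty path. *)
Fixpoint dpath {Rel V : Type} (u v : Rel -> V) (x y : V) (p : list Rel) : Prop :=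
  match p with
  | [] => x = y
  | e :: p' => u e = x /\ dpath u v (v e) y p'
  end.

(* (a,b) in Pi_{x,y}(P^f(I)) where P is the set of atoms listed in P *)
Definition proj_Pf {Rel V D : Type} (u v : Rel -> V) (P : list Rel)
    (I : instance Rel D) (x y : V) (a b : D) : Prop :=
  exists t : V -> D,
    (forall S, In S P -> I S (t (u S)) (t (v S))) /\ t x = a /\ t y = b.

(* Main.v *)
Require Import Defs.
From Stdlib Require Import List Classical.
Import ListNotations.

Lemma chain_eq (Rel V D : Type) (u v : Rel -> V) (J1 J2 : instance Rel D)
  (p : list Rel) : forall x y, dpath u v x y p ->
  (forall S, In S p -> forall a b b', J1 S a b -> J2 S a b' -> b = b') ->
  forall t1 t2 : V -> D,
  (forall S, In S p -> J1 S (t1 (u S)) (t1 (v S))) ->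
  (forall S, In S p -> J2 S (t2 (u S)) (t2 (v S))) ->
  t1 x = t2 x -> t1 y = t2 y.
Proof.
  induction p as [|e p IH]; simpl; intros x y Hp Hc t1 t2 A1 A2 Hx.
  - subst; auto.
  - destruct Hp as [He Hp].
    refine (IH (v e) y Hp (fun S HS => Hc S (or_intror HS)) t1 t2 _ _ _); auto.
    subst x. apply (Hc e (or_introl eq_refl) (t1 (u e))).
    + apply A1; auto.
    + rewrite Hx. apply A2; auto.
Qed.

Theorem lemma5p8
  (Rel V D : Type) (u v : Rel -> V) (cons : Rel -> bool)
  (Hfin_rel : exists l : list Rel, forall R, In R l)
  (Hvars : forall x : V, exists R, u R = x \/ v R = x)
  (Huv : forall R, u R <> v R)
  (I : instance Rel D) (HIfin : finite_inst I)
  (HIcons : forall R, cons R = true -> key_consistent I R)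
  (R : Rel) (HR : cons R = false)
  (w : V)
  (Hplus : exists p, dpath u v (u R) w p /\ ~ In R p)
  (Hoplus : exists p, dpath u v (v R) w p /\ (forall S, In S p -> cons S = true))
  (Ps : list Rel)
  (HP : dpath u v (v R) w Ps)
  (HPc : forall S, In S Ps -> cons S = true)
  (HPsimple : NoDup (u R :: v R :: map v Ps))
  (a b1 b2 : D)
  (H1 : proj_Pf u v (R :: Ps) I (u R) w a b1)
  (H2 : proj_Pf u v (R :: Ps) I (u R) w a b2)
  (Hne : b1 <> b2) :
  forall r : instance Rel D, frugal u v I r ->
    ~ (exists t : V -> D, Qf u v r t /\ t (u R) = a).
Proof.
  intros r [[Hsub [Hcons Hmax]] Hfr] [t [Ht Hta]].
  set (c := t (v R)).
  assert (HrI : forall S, In S Ps -> forall x y y', I S x y -> I S x y' -> y = y').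
  { intros S HS. apply HIcons; auto. }
  assert (Hex : exists ti : V -> D,
    (forall S, In S (R :: Ps) -> I S (ti (u S)) (ti (v S))) /\ ti (u R) = a /\ ti w <> t w).
  { destruct (classic (b1 = t w)) as [E|E].
    - destruct H2 as [t2 [A [B C]]]. exists t2. repeat split; auto. congruence.
    - destruct H1 as [t1 [A [B C]]]. exists t1. repeat split; auto. congruence. }
  destruct Hex as [ti [Ati [Hti Htiw]]].
  set (c' := ti (v R)).
  assert (HIc' : I R a c').
  { unfold c'. rewrite <- Hti. apply Ati. left; reflexivity. }
  assert (Hcc' : c <> c').
  { intro E. apply Htiw. symmetry.
    apply (chain_eq _ _ _ u v r I Ps (v R) w HP).
    - intros S HS x y y' A B. eapply HrI; eauto.
    - intros S _. apply Ht.
    - intros S HS. apply Ati. right; auto.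
    - exact E. }
  set (r' := fun S x y => (S = R /\ x = a /\ y = c') \/ (~ (S = R /\ x = a) /\ r S x y)).
  assert (Hr'I : sub_inst r' I).
  { intros S x y [[-> [-> ->]] | [_ H]]; auto. }
  assert (Hr'c : consistent_inst r').
  { intros S x y y' [[E1 [E2 E3]] | [N H]] [[E1' [E2' E3']] | [N' H']]; subst; auto.
    - exfalso; auto.
    - exfalso; auto.
    - eapply Hcons; eauto. }
  apply Hfr. exists r'. split; [|split].
  - split; [exact Hr'I|split; [exact Hr'c|]].
    intros r'' Hs Hs2 Hc2.
    set (r3 := fun S x y => (S = R /\ x = a /\ y = c) \/ (~ (S = R /\ x = a) /\ r'' S x y)).
    assert (Hr3 : sub_inst r3 r).
    { apply Hmax.
      - intros S x y H. destruct (classic (S = R /\ x = a)) as [[-> ->]|N].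
        + left. repeat split. eapply Hcons; eauto. unfold c. rewrite <- Hta. apply Ht.
        + right. split; auto. apply Hs. right; auto.
      - intros S x y [[-> [-> ->]] | [_ H]]; auto.
        apply Hsub. unfold c. rewrite <- Hta. apply Ht.
      - intros S x y y' [[E1 [E2 E3]] | [N H]] [[E1' [E2' E3']] | [N' H']]; subst; auto.
        + exfalso; auto.
        + exfalso; auto.
        + eapply Hc2; eauto. }
    intros S x y H. destruct (classic (S = R /\ x = a)) as [[-> ->]|N].
    + left. repeat split. eapply Hc2; eauto. apply Hs. left; auto.
    + right. split; auto. apply Hr3. right; auto.
  - intros t' Ht'.
    destruct (classic (t' (u R) = a)) as [Ea|Ea].
    + exfalso.
      assert (Ev : t' (v R) = c').
      { destruct (Ht' R) as [[_ [_ E]] | [N _]]; auto. exfalso; auto. }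
      assert (E1 : t' w = ti w).
      { apply (chain_eq _ _ _ u v r' I Ps (v R) w HP).
        - intros S HS x y y' A B. eapply HrI; eauto.
        - intros S _. apply Ht'.
        - intros S HS. apply Ati. right; auto.
        - exact Ev. }
      destruct Hplus as [p [Hp HnR]].
      assert (E2 : t' w = t w).
      { apply (chain_eq _ _ _ u v r' r p (u R) w Hp).
        - intros S HS x y y' A B. destruct A as [[-> _] | [_ A]].
          + contradiction.
          + eapply Hcons; eauto.
        - intros S _. apply Ht'.
        - intros S _. apply Ht.
        - congruence. }
      congruence.
    + intro S. destruct (Ht' S) as [[-> [E _]] | [_ H]]; auto. contradiction.
  - exists t. split; auto. intro H. destruct (H R) as [[_ [_ E]] | [N _]].
    + apply Hcc'. exact E.
    + apply N. auto.
Qed.
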